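(* Let $\{\hat{\mathcal Z}_t\}_{t=1}^{T+1}$ be Banach spaces, $\mathfrak F$ a class of uniformly bounded measurable functions (used on each $\hat{\mathcal Z}_{t+1}$), and $\varepsilon_t,\delta_t>0$. Suppose $\hat\sigma_t:\mathcal H_t\to\hat{\mathcal Z}_t$, $\hat P_t:\hat{\mathcal Z}_t\times\mathcal A\to\Delta(\hat{\mathcal Z}_{t+1})$, $\hat r_t:\hat{\mathcal Z}_t\times\mathcal A\to\mathbb R$ ($t=1,\dots,T$) form an $(\{\varepsilon_t\},\{\delta_t\})$-AIS generator, i.e. (AP1) for all $t$, all realizations $h_t$ of $H_t$ and all $a_t\in\mathcal A$: $\big|\mathbb E[R_t\mid H_t=h_t,A_t=a_t]-\hat r_t(\hat\sigma_t(h_t),a_t)\big|\le\varepsilon_t$; (AP2) for all $t$, $h_t$, $a_t$: with $\mu_t(B)=\mathbb P(\hat\sigma_{t+1}(H_{t+1})\in B\mid H_t=h_t,A_t=a_t)$ and $\nu_t(B)=\hat P_t(B\mid\hat\sigma_t(h_t),a_t)$ for Borel $B\subseteq\hat{\mathcal Z}_{t+1}$, $d_{\mathfrak F}(\mu_t,\nu_t)\le\delta_t$. Define $\hat V_{T+1}\equiv0$ and for $t=T,\dots,1$: $\hat Q_t(\hat z,a)=\hat r_t(\hat z,a)+\int_{\hat{\mathcal Z}_{t+1}}\hat V_{t+1}(\hat z')\,\hat P_t(d\hat z'\mid\hat z,a)$ and $\hat V_t(\hat z)=\max_{a\in\mathcal A}\hat Q_t(\hat z,a)$. Let $\alpha_{T+1}=0$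 and $\alpha_t=\varepsilon_t+\rho_{\mathfrak F}(\hat V_{t+1})\delta_t+\alpha_{t+1}$ for $t=T,\dots,1$, so that $\alpha_t=\varepsilon_t+\sum_{\tau=t+1}^{T}\big[\rho_{\mathfrak F}(\hat V_\tau)\delta_{\tau-1}+\varepsilon_\tau\big]$. Then: 1. For every $t$, every realization $h_t$ of $H_t$ and every $a_t\in\mathcal A$: $|Q_t(h_t,a_t)-\hat Q_t(\hat\sigma_t(h_t),a_t)|\le\alpha_t$ and $|V_t(h_t)-\hat V_t(\hat\sigma_t(h_t))|\le\alpha_t$. 2. Let $\hat\pi=(\hat\pi_1,\dots,\hat\pi_T)$ with $\hat\pi_t:\hat{\mathcal Z}_t\to\Delta(\mathcal A)$ satisfy $\mathrm{Supp}(\hat\pi_t(\hat z_t))\subseteq\arg\max_{a\in\mathcal A}\hat Q_t(\hat z_t,a)$ for all $\hat z_t$, and define $\pi_t=\hat\pi_t\circ\hat\sigma_t$. Then for every $t$, $h_t$, $a_t$: $|Q_t(h_t,a_t)-Q^\pi_t(h_t,a_t)|\le2\alpha_t$ and $|V_t(h_t)-V^\pi_t(h_t)|\le2\alpha_t$.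
   Context: Setting: a stochastic input-output system over a finite horizon $t=1,\dots,T$. At each time $t$ an agent chooses an action $A_t$ in a finite action space $\mathcal A$; the system then produces an observation $Y_t$ in a measurable space $\mathcal Y$ and a real reward $R_t$. The history is $H_1=\emptyset$, $H_{t+1}=(H_t,Y_t,A_t)$, taking values in $\mathcal H_t$; the conditional law of $(Y_t,R_t)$ given $(H_t,A_t)$ is fixed by the system. A (history-dependent) policy is $\pi=(\pi_1,\dots,\pi_T)$ with $\pi_t:\mathcal H_t\to\Delta(\mathcal A)$. Optimal value functions: $V_{T+1}\equiv0$, $Q_t(h_t,a_t)=\mathbb E[R_t+V_{t+1}(H_{t+1})\mid H_t=h_t,A_t=a_t]$, $V_t(h_t)=\max_{a\in\mathcal A}Q_t(h_t,a)$. Value functions of a policy $\pi$: $V^\pi_{T+1}\equiv0$, $Q^\pi_t(h_t,a_t)=\mathbb E[R_t+V^\pi_{t+1}(H_{t+1})\mid H_t=h_t,A_t=a_t]$, $V^\pi_t(h_t)=\sum_{a}\pi_t(a\mid h_t)Q^\pi_t(h_t,a)$. Integral probability metric: $d_{\mathfrak F}(\mu,\nu)=\sup_{f\in\mathfrak F}|\int f\,d\mu-\int f\,d\nu|$. Minkowski functional: $\rho_{\mathfrak F}(f)=\inf\{\rho>0:\rho^{-1}f\in\mathfrak F\}$. *)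

(* Defs.v *)
From HB Require Import structures.
From mathcomp Require Import all_boot all_order all_algebra.
From mathcomp Require Import all_classical all_reals all_analysis.
Unset Implicit Arguments.
Unset Strict Implicit.
Unset Printing Implicit Defensive.
Import Order.TTheory GRing.Theory Num.Theory.
Local Open Scope classical_set_scope.
Local Open Scope ring_scope.

(* maximum of a real function over a finite action set
   (computed in \bar R; A is nonempty in every use) *)
Definition fmax (A : finType) (R : realType) (f : A -> R) : R :=
  fine (\big[Order.max/-oo%E]_(a : A) (f a)%:E).

Definition ipm d (Z : measurableType d) (R : realType)
  (F : set (Z -> R)) (mu nu : set Z -> \bar R) : \bar R :=
  ereal_sup [set `| (\int[mu]_(z in setT) (f z)%:E - \int[nu]_(z in setT) (f z)%:E)%E |%E
            | f in F].

(* Minkowski functional rho_F(f) = inf { rho > 0 : rho^{-1} f \in F }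
   (= +oo when the set is empty) *)
Definition minkowski (Z : Type) (R : realType) (F : set (Z -> R)) (f : Z -> R)
  : \bar R :=
  ereal_inf [set r%:E | r in [set r : R | 0 < r /\ F (fun z => r^-1 * f z)]].

Arguments fmax {A R}.
Arguments ipm {d Z R}.
Arguments minkowski {Z R}.

Definition is_distr (A : finType) (R : realType) (p : A -> R) : Prop :=
  (forall a, 0 <= p a) /\ \sum_(a : A) p a = 1.

Arguments is_distr {A R}.

Section System.
Context (R : realType) (A : finType).
Context (dY : measure_display) (Y : measurableType dY).
(* history spaces H_t and the history update H_{t+1} = (H_t, Y_t, A_t) *)
Context (dH : nat -> measure_display) (H : forall t, measurableType (dH t)).
Context (ext : forall t, H t -> Y -> A -> H t.+1).
(* conditional law of (Y_t, R_t) given H_t = h, A_t = a *)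
Context (K : forall t, H t -> A -> probability (Y * R)%type R).

(* n = number of remaining steps; V_t = Vopt_aux (T+1-t) t *)
Fixpoint Vopt_aux (n t : nat) : H t -> R :=
  match n with
  | 0 => fun _ => 0
  | n'.+1 => fun h => fmax (fun a =>
       Rintegral (K t h a) setT
         (fun yr => yr.2 + Vopt_aux n' t.+1 (ext t h yr.1 a)))
  end.

Definition Vopt (T t : nat) (h : H t) : R := Vopt_aux (T.+1 - t) t h.

Definition Qopt (T t : nat) (h : H t) (a : A) : R :=
  Rintegral (K t h a) setT (fun yr => yr.2 + Vopt T t.+1 (ext t h yr.1 a)).

(* value functions of a history-dependent policy pi_t : H_t -> Delta(A) *)
Context (pi : forall t, H t -> A -> R).

Fixpoint Vpol_aux (n t : nat) : H t -> R :=
  match n with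
  | 0 => fun _ => 0
  | n'.+1 => fun h => \sum_(a : A) pi t h a *
       Rintegral (K t h a) setT
         (fun yr => yr.2 + Vpol_aux n' t.+1 (ext t h yr.1 a))
  end.

Definition Vpol (T t : nat) (h : H t) : R := Vpol_aux (T.+1 - t) t h.

Definition Qpol (T t : nat) (h : H t) (a : A) : R :=
  Rintegral (K t h a) setT (fun yr => yr.2 + Vpol T t.+1 (ext t h yr.1 a)).

End System.

Section AIS.
Context (R : realType) (A : finType).
Context (dZ : nat -> measure_display) (Z : forall t, measurableType (dZ t)).
Context (Phat : forall t, Z t -> A -> probability (Z t.+1) R).
Context (rhat : forall t, Z t -> A -> R).

Fixpoint Vhat_aux (n t : nat) : Z t -> R :=
  match n with
  | 0 => fun _ => 0
  | n'.+1 => fun z => fmax (fun a =>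
       rhat t z a + Rintegral (Phat t z a) setT (Vhat_aux n' t.+1))
  end.

Definition Vhat (T t : nat) (z : Z t) : R := Vhat_aux (T.+1 - t) t z.

Definition Qhat (T t : nat) (z : Z t) (a : A) : R :=
  rhat t z a + Rintegral (Phat t z a) setT (Vhat T t.+1).

Context (F : forall t, set (Z t.+1 -> R)) (eps delta : nat -> R).

Fixpoint alpha_aux (n t : nat) : \bar R :=
  match n with
  | 0 => 0%E
  | n'.+1 => ((eps t)%:E
              + minkowski (F t) (Vhat_aux n' t.+1) * (delta t)%:E
              + alpha_aux n' t.+1)%E
  end.

Definition alpha (T t : nat) : \bar R := alpha_aux (T.+1 - t) t.

End AIS.

Arguments Vopt {R A dY Y dH H} ext K T t h.
Arguments Qopt {R A dY Y dH H} ext K T t h a.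
Arguments Vpol {R A dY Y dH H} ext K pi T t h.
Arguments Qpol {R A dY Y dH H} ext K pi T t h a.
Arguments Vhat {R A dZ Z} Phat rhat T t z.
Arguments Qhat {R A dZ Z} Phat rhat T t z a.
Arguments alpha {R A dZ Z} Phat rhat F eps delta T t.

(* Main.v *)
Require Import Defs.
From HB Require Import structures.
From mathcomp Require Import all_boot all_order all_algebra.
From mathcomp Require Import all_classical all_reals all_analysis.
From mathcomp Require Import lra ring zify measurable_realfun.
Import Order.TTheory GRing.Theory Num.Theory.
Local Open Scope classical_set_scope.
Local Open Scope ring_scope.

Section Helpers.
Context {R : realType}.



Lemma fmax_ex {A : finType} (f : A -> R) (a0 : A) :
  exists a, fmax f = f a /\ forall b, f b <= f a.
Proof.
rewrite /fmax.
have [i0 _ Hi] := @eq_bigmax _ _ A (-oo)%E a0 xpredT (fun a => (f a)%:E) isT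
  (fun i _ => leNye _).
exists i0; split; first by rewrite Hi.
move=> b; have := @le_bigmax _ _ A (-oo)%E (fun a => (f a)%:E) b.
by rewrite Hi lee_fin.
Qed.

Lemma fmax_ge {A : finType} (f : A -> R) a : f a <= fmax f.
Proof. by have [i [-> H]] := fmax_ex f a. Qed.

Lemma fmax_eq {A : finType} (f : A -> R) a : (forall b, f b <= f a) -> fmax f = f a.
Proof.
move=> H; have [i [-> Hi]] := fmax_ex f a.
by apply/eqP; rewrite eq_le H Hi.
Qed.

Lemma fmax_dist {A : finType} (f g : A -> R) c (a0 : A) :
  (forall a, `|f a - g a| <= c) -> `|fmax f - fmax g| <= c.
Proof.
move=> H.
have [i [-> Hi]] := fmax_ex f a0.
have [j [-> Hj]] := fmax_ex g a0.
have := H i; have := H j; have := Hi j; have := Hj i.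
rewrite !ler_norml => ? ? /andP[? ?] /andP[? ?].
apply/andP; split; lra.
Qed.


Lemma bdd_integrable {d} {X : measurableType d} (P : probability X R) (f : X -> R) (M : R) :
  measurable_fun setT f -> (forall x, `|f x| <= M) -> P.-integrable setT (EFin \o f).
Proof.
move=> mf fM; apply/integrableP; split; first exact/measurable_EFinP.
apply: (le_lt_trans (integral_le_bound (`|M|%:E) _ _ _ _)) => //.
- exact/measurable_EFinP.
- by apply: aeW => x _ /=; rewrite lee_fin (le_trans (fM x)) // ler_norm.
- apply: lte_mul_pinfty => //.
  by apply: (le_lt_trans (probability_le1 P measurableT)); rewrite ltry.
Qed.

Lemma RintE {d} {X : measurableType d} (P : probability X R) (f : X -> R) :
  P.-integrable setT (EFin \o f) ->
  (Rintegral P setT f)%:E = (\int[P]_(x in setT) (f x)%:E)%E.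
Proof. by move=> If; rewrite fineK // (integrable_fin_num _ If). Qed.

Lemma inf_step (S : set R) (x d : R) : 0 < d ->
  (forall r, S r -> x <= r * d) ->
  (x%:E <= ereal_inf [set r%:E | r in S] * d%:E)%E.
Proof.
move=> d0 H.
have -> : x = (x / d) * d by rewrite divfK // gt_eqF.
rewrite EFinM; apply: lee_wpmul2r; first by rewrite lee_fin ltW.
apply: le_ereal_inf_tmp => _ [r Sr <-]; rewrite lee_fin ler_pdivrMr //.
exact: H.
Qed.

Lemma ipm_step d1 (X : measurableType d1) d2 (Zs : measurableType d2)
  (P : probability X R) (Q : probability Zs R) (g : X -> Zs)
  (Fs : set (Zs -> R)) (W : Zs -> R) (dl r : R) :
  measurable_fun setT g ->
  (forall f, Fs f -> measurable_fun setT f) ->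
  (exists M : R, forall f z, Fs f -> `|f z| <= M) ->
  (ipm Fs (pushforward P g) Q <= dl%:E)%E ->
  0 < r -> Fs (fun z => r^-1 * W z) ->
  [/\ P.-integrable setT (EFin \o (W \o g)), Q.-integrable setT (EFin \o W) &
   `|Rintegral P setT (W \o g) - Rintegral Q setT W| <= r * dl].
Proof.
move=> mg mF [M hM] hipm r0 Ff.
set f := fun z => r^-1 * W z.
have mf : measurable_fun setT f := mF _ Ff.
have fM : forall z, `|f z| <= M := fun z => hM _ z Ff.
have Wf : forall z, W z = r * f z.
  by move=> z; rewrite /f mulrA divff ?mul1r // gt_eqF.
have mW : measurable_fun setT W.
  rewrite (_ : W = fun z => r * f z); last by apply: funext => z; rewrite Wf.
  exact: measurable_funM.
have WM : forall z, `|W z| <= r * M.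
  by move=> z; rewrite Wf normrM gtr0_norm // ler_pM2l.
have mWg : measurable_fun setT (W \o g) := measurableT_comp mW mg.
have iWg := bdd_integrable P _ _ mWg (fun x => WM (g x)).
have iW := bdd_integrable Q _ _ mW WM.
have mfg : measurable_fun setT (f \o g) := measurableT_comp mf mg.
have ifg := bdd_integrable P _ _ mfg (fun x => fM (g x)).
have ifQ := bdd_integrable Q _ _ mf fM.
split => //.
have H1 : (`|\int[pushforward P g]_(z in setT) (f z)%:E
            - \int[Q]_(z in setT) (f z)%:E|%E <= dl%:E)%E.
  by apply: le_trans hipm; apply: ereal_sup_ubound; exists f.
have E : (\int[pushforward P g]_(z in setT) (f z)%:E
          = \int[P]_(x in setT) (f (g x))%:E)%E.
  rewrite (@integral_pushforward _ _ _ _ _ g mg P setT (EFin \o f)) //.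
  by apply/measurable_EFinP.
rewrite E in H1.
have E1 : Rintegral P setT (W \o g) = r * Rintegral P setT (f \o g).
  by rewrite -RintegralZl //; apply: eq_Rintegral => x _; rewrite /= Wf.
have E2 : Rintegral Q setT W = r * Rintegral Q setT f.
  by rewrite -RintegralZl //; apply: eq_Rintegral => x _; exact: Wf.
rewrite E1 E2 -mulrBr normrM gtr0_norm // ler_pM2l // -lee_fin.
have -> : (`|Rintegral P setT (f \o g) - Rintegral Q setT f|)%:E =
  `|(Rintegral P setT (f \o g))%:E - (Rintegral Q setT f)%:E|%E by [].
by rewrite !RintE.
Qed.

Lemma Rint_cstP {d} {X : measurableType d} (P : probability X R) (b : R) :
  Rintegral P setT (fun _ => b) = b.
Proof.
rewrite Rintegral_cst //.
have -> : fine (P setT) = 1 by rewrite probability_setT.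
by rewrite mulr1.
Qed.

Lemma stepQ d1 (X : measurableType d1) d2 (Zs : measurableType d2)
  (P : probability X R) (Q : probability Zs R) (g : X -> Zs)
  (Fs : set (Zs -> R)) (W : Zs -> R) (rw Vp : X -> R) (rh e dl : R)
  (al : \bar R) :
  measurable_fun setT g ->
  (forall f, Fs f -> measurable_fun setT f) ->
  (exists M : R, forall f z, Fs f -> `|f z| <= M) ->
  0 < dl -> (0 <= al)%E ->
  P.-integrable setT (EFin \o rw) -> P.-integrable setT (EFin \o Vp) ->
  `|Rintegral P setT rw - rh| <= e ->
  (forall x, ((`|Vp x - W (g x)|)%:E <= al)%E) ->
  (ipm Fs (pushforward P g) Q <= dl%:E)%E ->
  ((`|Rintegral P setT (fun x => rw x + Vp x) - (rh + Rintegral Q setT W)|)%:E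
     <= e%:E + Defs.minkowski Fs W * dl%:E + al)%E.
Proof.
move=> mg mF hM dl0 al0 irw iVp hr hV hipm.
have alNy : al != -oo%E.
  by rewrite gt_eqF // (lt_le_trans _ al0) // ltNyr.
set S := [set r : R | 0 < r /\ Fs (fun z => r^-1 * W z)].
have [[r0 [r00 Fr0]] | nS] := pselect (exists r, S r); last first.
  have -> : Defs.minkowski Fs W = +oo%E.
    rewrite /Defs.minkowski (_ : [set r%:E | r in _] = set0) ?ereal_inf0 //.
    by apply/seteqP; split => // x [r Sr _]; apply: nS; exists r.
  by rewrite gt0_mulye ?lte_fin // addey // addye ?leey.
have [iWg iW _] := @ipm_step _ _ _ _ P Q g Fs W dl _ mg mF hM hipm r00 Fr0.
rewrite RintegralD //.
set I1 := Rintegral P setT rw; set I2 := Rintegral P setT Vp.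
set I3 := Rintegral P setT (W \o g); set I4 := Rintegral Q setT W.
have key : `|I1 + I2 - (rh + I4)| <= `|I1 - rh| + `|I3 - I4| + `|I2 - I3|.
  have -> : I1 + I2 - (rh + I4) = (I1 - rh) + (I3 - I4) + (I2 - I3).
    by rewrite /I1 /I2 /I3 /I4; lra.
  apply: (le_trans (ler_normD _ _)); rewrite lerD2r; exact: ler_normD.
apply: (le_trans (_ : _ <= (`|I1 - rh|)%:E + (`|I3 - I4|)%:E + (`|I2 - I3|)%:E)%E).
  by rewrite -!EFinD lee_fin.
apply: leeD; first apply: leeD.
- by rewrite lee_fin.
- apply: inf_step => // r [r0' Fr].
  by have [_ _ ] := @ipm_step _ _ _ _ P Q g Fs W dl _ mg mF hM hipm r0' Fr.
- move: al0 alNy hV; case: al => [b| |] al0 alNy hV; last by [].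
    2: by rewrite leey.
  rewrite lee_fin.
  have mVp : measurable_fun setT Vp.
    by case/integrableP: iVp => /measurable_EFinP.
  have mWg : measurable_fun setT (W \o g).
    by case/integrableP: iWg => /measurable_EFinP.
  have hb : forall x, `|(fun x => Vp x - (W \o g) x) x| <= b.
    by move=> x; rewrite -lee_fin; exact: hV.
  have ih := bdd_integrable P _ _ (measurable_funB mVp mWg) hb.
  rewrite /I2 /I3 -RintegralB // ler_norml; apply/andP; split.
  + rewrite -[X in X <= _](Rint_cstP P (- b)).
    apply: le_Rintegral => //.
      by apply: (bdd_integrable P _ `|- b| (measurable_cst _)) => x /=.
    by move=> x _; have := hb x; rewrite ler_norml => /andP[].
  + rewrite -[X in _ <= X](Rint_cstP P b).
    apply: le_Rintegral => //.
      by apply: (bdd_integrable P _ `|b| (measurable_cst _)) => x /=.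
    by move=> x _; have := hb x; rewrite ler_norml => /andP[].
Qed.

Lemma tri2 (x y z : R) (al : \bar R) :
  ((`|x - z|)%:E <= al)%E -> ((`|y - z|)%:E <= al)%E ->
  ((`|x - y|)%:E <= 2%:E * al)%E.
Proof.
case: al => [c| |] h1 h2.
- rewrite lee_fin in h1; rewrite lee_fin in h2; rewrite -EFinM lee_fin.
  rewrite (_ : x - y = (x - z) - (y - z)); last by ring.
  apply: (le_trans (ler_normB _ _)); lra.
- by rewrite gt0_muley ?leey // lte_fin.
- by move: h1; rewrite leeNy_eq.
Qed.

End Helpers.
Arguments stepQ {R d1 X d2 Zs P Q g Fs W rw Vp rh e dl al}.

Theorem mainTheorem2
  (R : realType) (A : finType) (T : nat)
  (* the stochastic input-output system *)
  (dY : measure_display) (Y : measurableType dY)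
  (dH : nat -> measure_display) (H : forall t, measurableType (dH t))
  (ext : forall t, H t -> Y -> A -> H t.+1)
  (K : forall t, H t -> A -> probability (Y * R)%type R)
  (* the AIS generator *)
  (dZ : nat -> measure_display) (Z : forall t, measurableType (dZ t))
  (sigma : forall t, H t -> Z t)
  (Phat : forall t, Z t -> A -> probability (Z t.+1) R)
  (rhat : forall t, Z t -> A -> R)
  (F : forall t, set (Z t.+1 -> R))
  (eps delta : nat -> R)
  (pihat : forall t, Z t -> A -> R) :
  (* F : uniformly bounded measurable functions *)
  (forall t, (forall f, F t f -> measurable_fun setT f) /\
             (exists M : R, forall f z, F t f -> `|f z| <= M)) ->
  (forall t, (1 <= t <= T)%N -> 0 < eps t /\ 0 < delta t) ->
  (* sigma_t(H_t) and H_{t+1} are random variables *)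
  (forall t, measurable_fun setT (sigma t)) ->
  (forall t (h : H t) (a : A), measurable_fun setT (fun y : Y => ext t h y a)) ->
  (* expectations appearing in the value functions are well defined *)
  (forall t, (1 <= t <= T)%N -> forall (h : H t) (a : A),
     (K t h a).-integrable setT (fun yr => (yr.2)%:E) /\
     (K t h a).-integrable setT
        (fun yr => (Vopt ext K T t.+1 (ext t h yr.1 a))%:E) /\
     (K t h a).-integrable setT
        (fun yr => (Vpol ext K (fun t h a => pihat t (sigma t h) a)
                       T t.+1 (ext t h yr.1 a))%:E)) ->
  (forall t, (1 <= t <= T)%N -> forall (z : Z t) (a : A),
     (Phat t z a).-integrable setT (fun z' => (Vhat Phat rhat T t.+1 z')%:E)) ->
  (* (AP1) *)
  (forall t, (1 <= t <= T)%N -> forall (h : H t) (a : A),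
     `| Rintegral (K t h a) setT (fun yr => yr.2) - rhat t (sigma t h) a |
       <= eps t) ->
  (* (AP2) *)
  (forall t, (1 <= t <= T)%N -> forall (h : H t) (a : A),
     (ipm (F t)
        (pushforward (K t h a) (fun yr => sigma t.+1 (ext t h yr.1 a)))
        (Phat t (sigma t h) a) <= (delta t)%:E)%E) ->
  (* pihat_t(z) is a distribution supported on argmax_a Qhat_t(z, a) *)
  (forall t, (1 <= t <= T)%N -> forall z : Z t,
     is_distr (pihat t z) /\
     (forall a, 0 < pihat t z a -> forall b, Qhat Phat rhat T t z b <= Qhat Phat rhat T t z a)) ->
  forall t, (1 <= t <= T)%N -> forall (h : H t) (a : A),
    let pi := fun t h a => pihat t (sigma t h) a in
    let al := alpha Phat rhat F eps delta T t in
    ((`| Qopt ext K T t h a - Qhat Phat rhat T t (sigma t h) a |)%:E <= al)%E /\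
    ((`| Vopt ext K T t h - Vhat Phat rhat T t (sigma t h) |)%:E <= al)%E /\
    ((`| Qopt ext K T t h a - Qpol ext K pi T t h a |)%:E <= 2%:E * al)%E /\
    ((`| Vopt ext K T t h - Vpol ext K pi T t h |)%:E <= 2%:E * al)%E.
Proof.
move=> hF hpos hsig hext hint hintV hAP1 hAP2 hpi t ht h a pi al.
have a0 := a.
have VoptE : forall t0 (h0 : H t0), (t0 <= T)%N ->
    Vopt ext K T t0 h0 = fmax (fun b => Qopt ext K T t0 h0 b).
  by move=> t0 h0 le; rewrite /Vopt (_ : (T.+1 - t0 = (T - t0).+1)%N); [|lia].
have VpolE : forall t0 (h0 : H t0), (t0 <= T)%N ->
    Vpol ext K pi T t0 h0 = \sum_b pi t0 h0 b * Qpol ext K pi T t0 h0 b.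
  by move=> t0 h0 le; rewrite /Vpol (_ : (T.+1 - t0 = (T - t0).+1)%N); [|lia].
have VhatE : forall t0 (z : Z t0), (t0 <= T)%N ->
    Vhat Phat rhat T t0 z = fmax (fun b => Qhat Phat rhat T t0 z b).
  by move=> t0 z le; rewrite /Vhat (_ : (T.+1 - t0 = (T - t0).+1)%N); [|lia].
have alphaE : forall t0, (t0 <= T)%N ->
    alpha Phat rhat F eps delta T t0 = ((eps t0)%:E
      + Defs.minkowski (F t0) (Vhat Phat rhat T t0.+1) * (delta t0)%:E
      + alpha Phat rhat F eps delta T t0.+1)%E.
  by move=> t0 le; rewrite /alpha (_ : (T.+1 - t0 = (T - t0).+1)%N); [|lia].
have mink0 : forall t0 W, (0 <= Defs.minkowski (F t0) W)%E.
  move=> t0 W; apply: le_ereal_inf_tmp => _ [r [r0 _] <-].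
  by rewrite lee_fin ltW.
have alpha0 : forall n t0, (T.+1 - t0 = n)%N -> (1 <= t0)%N ->
    (0 <= alpha Phat rhat F eps delta T t0)%E.
  elim => [|n IH] t0 Hn H1; first by rewrite /alpha Hn.
  have le : (t0 <= T)%N by lia.
  rewrite alphaE //.
  have [e0 d0] := hpos t0 ltac:(lia).
  apply: adde_ge0; first apply: adde_ge0.
  - by rewrite lee_fin ltW.
  - by apply: mule_ge0 => //; rewrite lee_fin ltW.
  - by apply: (IH t0.+1) => //; lia.
set alp := alpha Phat rhat F eps delta T.
have Qstep : forall t0, (1 <= t0 <= T)%N ->
  (forall h1 : H t0.+1,
    ((`|Vopt ext K T t0.+1 h1 - Vhat Phat rhat T t0.+1 (sigma t0.+1 h1)|)%:E
       <= alp t0.+1)%E /\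
    ((`|Vpol ext K pi T t0.+1 h1 - Vhat Phat rhat T t0.+1 (sigma t0.+1 h1)|)%:E
       <= alp t0.+1)%E) ->
  forall (h0 : H t0) (b : A),
   ((`|Qopt ext K T t0 h0 b - Qhat Phat rhat T t0 (sigma t0 h0) b|)%:E
      <= alp t0)%E /\
   ((`|Qpol ext K pi T t0 h0 b - Qhat Phat rhat T t0 (sigma t0 h0) b|)%:E
      <= alp t0)%E.
  move=> t0 ht0 IH h0 b.
  have [e0 d0] := hpos t0 ht0.
  have [i1 [i2 i3]] := hint t0 ht0 h0 b.
  have [mF bF] := hF t0.
  have mg : measurable_fun setT
      (fun yr : Y * R => sigma t0.+1 (ext t0 h0 yr.1 b)).
    exact: measurableT_comp (hsig _) (measurableT_comp (hext t0 h0 b) measurable_fst).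
  have al0 : (0 <= alp t0.+1)%E by exact: (alpha0 _ t0.+1 erefl).
  rewrite /alp alphaE; last by case/andP: ht0.
  split.
  - rewrite /Qopt /Qhat.
    apply: (stepQ mg mF bF d0 al0 i1 i2 (hAP1 t0 ht0 h0 b) _ (hAP2 t0 ht0 h0 b)).
    by move=> yr; exact: (IH _).1.
  - rewrite /Qpol /Qhat.
    apply: (stepQ mg mF bF d0 al0 i1 i3 (hAP1 t0 ht0 h0 b) _ (hAP2 t0 ht0 h0 b)).
    by move=> yr; exact: (IH _).2.
have Vstep : forall t0, (1 <= t0 <= T)%N ->
  (forall (h0 : H t0) (b : A),
   ((`|Qopt ext K T t0 h0 b - Qhat Phat rhat T t0 (sigma t0 h0) b|)%:E
      <= alp t0)%E /\
   ((`|Qpol ext K pi T t0 h0 b - Qhat Phat rhat T t0 (sigma t0 h0) b|)%:E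
      <= alp t0)%E) ->
  forall h0 : H t0,
    ((`|Vopt ext K T t0 h0 - Vhat Phat rhat T t0 (sigma t0 h0)|)%:E
       <= alp t0)%E /\
    ((`|Vpol ext K pi T t0 h0 - Vhat Phat rhat T t0 (sigma t0 h0)|)%:E
       <= alp t0)%E.
  move=> t0 ht0 HQ h0.
  have le : (t0 <= T)%N by case/andP: ht0.
  have al0 : (0 <= alp t0)%E by apply: (alpha0 _ t0 erefl); case/andP: ht0.
  have HQ' := HQ h0; move: HQ' al0.
  case: (alp t0) => [c| |] HQ' al0; last by [].
    2: by split; apply: leey.
  rewrite !lee_fin.
  have [[pi0 pi1] pimax] := hpi t0 ht0 (sigma t0 h0).
  split.
  - rewrite VoptE // VhatE //.
    apply: (fmax_dist _ _ _ a0) => b.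
    by have := (HQ' b).1; rewrite lee_fin.
  - rewrite VpolE // VhatE //.
    set Vh := fmax _.
    have hVh : forall b, pihat t0 (sigma t0 h0) b * Vh
        = pihat t0 (sigma t0 h0) b * Qhat Phat rhat T t0 (sigma t0 h0) b.
      move=> b; have := pi0 b; rewrite le_eqVlt => /predU1P[<-|pos].
        by rewrite !mul0r.
      by rewrite /Vh (fmax_eq _ _ (pimax b pos)).
    have -> : Vh = \sum_b pihat t0 (sigma t0 h0) b *
                   Qhat Phat rhat T t0 (sigma t0 h0) b.
      by rewrite -(eq_bigr _ (fun b _ => hVh b)) -mulr_suml pi1 mul1r.
    rewrite -sumrB.
    under eq_bigr do rewrite -mulrBr.
    apply: (le_trans (ler_norm_sum _ _ _)).
    apply: (le_trans (_ : _ <= \sum_b pihat t0 (sigma t0 h0) b * c)).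
      apply: ler_sum => b _; rewrite normrM ger0_norm; last exact: pi0.
      apply: ler_wpM2l; first exact: pi0.
      by have := (HQ' b).2; rewrite lee_fin.
    by rewrite -mulr_suml pi1 mul1r.
have claim : forall n t0, (T.+1 - t0 = n)%N -> (1 <= t0)%N -> forall h0 : H t0,
    ((`|Vopt ext K T t0 h0 - Vhat Phat rhat T t0 (sigma t0 h0)|)%:E
       <= alp t0)%E /\
    ((`|Vpol ext K pi T t0 h0 - Vhat Phat rhat T t0 (sigma t0 h0)|)%:E
       <= alp t0)%E.
  elim => [|n IH] t0 Hn H1 h0.
    by rewrite /Vopt /Vpol /Vhat /alp /alpha Hn /= subrr normr0.
  have ht0 : (1 <= t0 <= T)%N by lia.
  apply: Vstep => // h1 b.
  apply: Qstep => // h2.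
  by apply: IH => //; lia.
have hQ := Qstep t ht (claim _ t.+1 erefl isT) h a.
have hV := claim _ t erefl (proj1 (andP ht)) h.
split; first exact: hQ.1.
split; first exact: hV.1.
split; first exact: (tri2 _ _ _ _ hQ.1 hQ.2).
exact: (tri2 _ _ _ _ hV.1 hV.2).
Qed.
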